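(* Let $n$ be a positive integer, let $a_n$ be an integer, and let $x$ be a nonzero real or complex number. Then \[ \left(\frac{x-1}{x}\right)^n\sum_{a_{n-1}=1}^{a_n}\sum_{a_{n-2}=1}^{a_{n-1}}\cdots\sum_{a_0=1}^{a_1}x^{a_0} = x^{a_n}-\sum_{j=0}^{n-1}\left(\frac{x-1}{x}\right)^j\binom{a_n+j-1}{j}. \]
   Context: For integers $c,m$ and a function $f$ on the integers, $\sum_{k=c}^m f(k)$ denotes the usual sum if $m\ge c$, equals $0$ if $m=c-1$, and equals $-\sum_{k=m+1}^{c-1}f(k)$ if $m\le c-2$. The nested sum $\sum_{a_{n-1}=c}^{a_n}\sum_{a_{n-2}=c}^{a_{n-1}}\cdots\sum_{a_0=c}^{a_1}g(a_0)$ is the iterated sum ($n$ summation signs): innermost over $a_0$ from $c$ to $a_1$, then over $a_1$ from $c$ to $a_2$, ..., outermost over $a_{n-1}$ from $c$ to $a_n$. For an integer $j\ge0$ and any number $y$, $\binom{y}{j}=y(y-1)\cdots(y-j+1)/j!$. *)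

(* Defs.v *)
From mathcomp Require Import all_boot all_order all_algebra.
Set Implicit Arguments. Unset Strict Implicit. Unset Printing Implicit Defensive.
Import Order.TTheory GRing.Theory Num.Theory.
Local Open Scope ring_scope.

(* Signed sum over integers: sum_{k=c}^m f k with the paper's convention. *)
Definition gsum (R : zmodType) (c m : int) (f : int -> R) : R :=
  if (c <= m)%R then \sum_(0 <= i < absz (m - c + 1)%R) f (c + (i : nat)%:Z)%R
  else - \sum_(0 <= i < absz (c - 1 - m)%R) f (m + 1 + (i : nat)%:Z)%R.

(* nested n c g a = sum_{a_{n-1}=c}^{a} ... sum_{a_0=c}^{a_1} g a_0 (n signs). *)
Fixpoint nested (R : zmodType) (n : nat) (c : int) (g : int -> R) (a : int) : R :=
  match n with
  | O => g a
  | S k => gsum c a (nested k c g)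
  end.

Definition gbinom (R : fieldType) (y : R) (j : nat) : R :=
  (\prod_(i < j) (y - i%:R)) / (j`!)%:R.

(* Main.v *)
Require Import Defs.
From mathcomp Require Import all_boot all_order all_algebra zify ring.
Import Order.TTheory GRing.Theory Num.Theory.
Local Open Scope ring_scope.

Lemma gsum_tel (R : zmodType) (c m : int) (f g : int -> R) :
  (forall k, g k = f k - f (k - 1)) -> gsum c m g = f m - f (c - 1).
Proof.
move=> Hg; rewrite /gsum; case: ifP => Hcm.
  rewrite (telescope_sumr_eq (fun i : nat => f (c - 1 + i%:Z))); last first.
  - move=> k _; rewrite Hg; congr (f _ - f _); lia.
  - by [].
  congr (f _ - f _); lia.
rewrite (telescope_sumr_eq (fun i : nat => f (m + i%:Z))); last first.
- move=> k _; rewrite Hg; congr (f _ - f _); lia.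
- by [].
rewrite opprB; congr (f _ - f _); lia.
Qed.

Lemma gbinom0 (R : fieldType) (y : R) : gbinom y 0 = 1.
Proof. by rewrite /gbinom big_ord0 divr1. Qed.

Lemma gbinom_pascal (R : numFieldType) (y : R) (j : nat) :
  gbinom y j.+1 - gbinom (y - 1) j.+1 = gbinom (y - 1) j.
Proof.
rewrite /gbinom big_ord_recl big_ord_recr /=.
have -> : \prod_(i < j) (y - (bump 0 i)%:R) = \prod_(i < j) (y - 1 - i%:R).
  by apply: eq_bigr => i _; rewrite /bump /= add1n -addn1 natrD; ring.
set Q := \prod_(i < j) _.
rewrite factS natrM.
have hj : (j.+1%:R : R) != 0 by rewrite pnatr_eq0.
have hf : ((j`!)%:R : R) != 0 by rewrite pnatr_eq0 -lt0n fact_gt0.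
rewrite invfM.
have -> : (y - 0%:R) * Q = Q * y by rewrite subr0 mulrC.
rewrite -mulrBl -mulrBr.
have -> : y - (y - 1 - j%:R) = j.+1%:R by rewrite -addn1 natrD; ring.
rewrite -!mulrA; congr (_ * _); by rewrite mulrA mulfV // mul1r.
Qed.

Lemma gbinom_neg (R : numFieldType) (j : nat) : gbinom (j%:R : R) j.+1 = 0.
Proof.
by rewrite /gbinom big_ord_recr /= subrr mulr0 mul0r.
Qed.

Lemma gsum_mull (R : ringType) (a : R) (c m : int) (h : int -> R) :
  a * gsum c m h = gsum c m (fun k => a * h k).
Proof. by rewrite /gsum; case: ifP => _; rewrite ?mulrN mulr_sumr. Qed.

Section Main.
Variables (R : numFieldType) (x : R).
Hypothesis hx : x != 0.
Let y := (x - 1) / x.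
Let P (n : nat) (m : int) :=
  \sum_(0 <= j < n) y ^+ j * gbinom ((m + j%:Z - 1)%:~R : R) j.

Lemma stepP n k : P n.+1 k - P n.+1 (k - 1) = y * P n k.
Proof.
rewrite /P !big_nat_recl // !expr0 !gbinom0 !mul1r opprD addrACA subrr add0r -sumrB mulr_sumr.
apply: eq_bigr => j _.
rewrite exprS -!mulrA -!mulrBr; congr (_ * (_ * (_ * _))).
have E1 : ((k + j.+1%:Z - 1)%:~R : R) = (k + j%:Z)%:~R by congr (_%:~R); lia.
have E2 : ((k - 1 + j.+1%:Z - 1)%:~R : R) = (k + j%:Z)%:~R - 1.
  by rewrite -[1]/(1%:~R) -intrB; congr (_%:~R); lia.
have E3 : ((k + j%:Z - 1)%:~R : R) = (k + j%:Z)%:~R - 1.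
  by rewrite -[1]/(1%:~R) -intrB.
by rewrite E1 E2 E3 gbinom_pascal.
Qed.

Lemma stepX (k : int) : y * x ^ k = x ^ k - x ^ (k - 1).
Proof.
rewrite expfzDr // exprN1 /y mulrBl divff // mulrC mul1r mulrBr mulr1.
by rewrite mulrC.
Qed.

Lemma mainP n m : y ^+ n * nested n 1 (fun a0 : int => x ^ a0) m = x ^ m - P n m.
Proof.
elim: n m => [|n IH] m.
  by rewrite expr0 mul1r /P big_geq // subr0.
rewrite exprS -mulrA /= gsum_mull gsum_mull.
rewrite (@gsum_tel _ _ _ (fun k => x ^ k - P n.+1 k)).
  have -> : x ^ (1 - 1) - P n.+1 (1 - 1) = 0; last by rewrite subr0.
  rewrite subrr /P big_nat_recl // expr0 gbinom0 mul1r expr0z big1 ?addr0 ?subrr //.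
  move=> j _.
  have -> : ((0 + j.+1%:Z - 1)%:~R : R) = (j%:Z)%:~R by congr (_%:~R); lia.
  by rewrite gbinom_neg mulr0.
move=> k; rewrite IH mulrBr stepX -stepP; ring.
Qed.

End Main.

Theorem lemma2 (R : numFieldType) (n : nat) (an : int) (x : R) :
  (0 < n)%N -> x != 0 ->
  ((x - 1) / x) ^+ n * nested n 1 (fun a0 : int => x ^ a0) an
  = x ^ an - \sum_(0 <= j < n) ((x - 1) / x) ^+ j * gbinom ((an + j%:Z - 1)%:~R : R) j.
Proof. by move=> _ hx; exact: (@mainP R x hx n an). Qed.
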